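(* In the binary random graph affiliation mixture model with $Q\ge2$ groups, uniform group priors $\pi_q=1/Q$, and $\alpha\ne\beta$, let $m_1=\mathbb E(X_{12})$ and $m_{41}=\mathbb E(X_{12}X_{23}X_{34}X_{14})$. Then $m_{41}>m_1^4$.
   Context: Random graph mixture model: nodes have i.i.d. latent groups $Z_i\in\{1,\dots,Q\}$ with $\pi_q=\mathbb P(Z_i=q)$; edge variables $X_{ij}$ ($i<j$) are conditionally independent given all $Z$'s, with law of $X_{ij}$ depending only on $(Z_i,Z_j)$. Binary affiliation model: $X_{ij}\in\{0,1\}$ with $\mathbb P(X_{ij}=1\mid Z_i=q,Z_j=l)=\alpha$ if $q=l$ and $=\beta$ if $q\ne l$. *)

(* Defs.v *)
From HB Require Import structures.
From mathcomp Require Import all_boot all_order all_algebra.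
Set Implicit Arguments. Unset Strict Implicit. Unset Printing Implicit Defensive.
Import Order.TTheory GRing.Theory Num.Theory.
Local Open Scope ring_scope.

(* Binary affiliation random graph mixture model, restricted to the 4 nodes
   involved in the moments m_1 and m_41 (nodes 1,2,3,4 are 'I_4 indices 0..3). *)

Definition node := 'I_4.

Definition edge := {p : node * node | (p.1 < p.2)%N}.

Definition outcome (Q : nat) := ({ffun node -> 'I_Q} * {ffun edge -> bool})%type.

Definition affil (R : nzRingType) (Q : nat) (alpha beta : R) (q l : 'I_Q) : R :=
  if q == l then alpha else beta.

(* Joint law: Z_i i.i.d. with law pi, X_ij conditionally independent Bernoulli
   given Z with parameter affil (Z_i) (Z_j). *)
Definition pmf (R : nzRingType) (Q : nat) (pi : 'I_Q -> R) (alpha beta : R)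
    (w : outcome Q) : R :=
  (\prod_(i : node) pi (w.1 i)) *
  \prod_(e : edge)
     (let p := affil alpha beta (w.1 (val e).1) (w.1 (val e).2) in
      if w.2 e then p else 1 - p).

Definition Expect (R : nzRingType) (Q : nat) (pi : 'I_Q -> R) (alpha beta : R)
    (f : outcome Q -> R) : R :=
  \sum_(w : outcome Q) pmf pi alpha beta w * f w.

(* Edge variable X_ij (as 0/1 in R); defined for i < j, and 0 otherwise (unused). *)
Definition Xv (R : nzRingType) (Q : nat) (i j : node) (w : outcome Q) : R :=
  if @insub _ (fun p : node * node => (p.1 < p.2)%N) edge (i, j) is Some e
  then (w.2 e)%:R else 0.

Definition n1 : node := inord 0.
Definition n2 : node := inord 1.
Definition n3 : node := inord 2.
Definition n4 : node := inord 3.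

Definition uniform_prior (R : fieldType) (Q : nat) : 'I_Q -> R := fun _ => (Q%:R)^-1.

Definition m1 (R : fieldType) (Q : nat) (alpha beta : R) : R :=
  @Expect R Q (@uniform_prior R Q) alpha beta (fun w => @Xv R Q n1 n2 w).

Definition m41 (R : fieldType) (Q : nat) (alpha beta : R) : R :=
  @Expect R Q (@uniform_prior R Q) alpha beta
    (fun w => @Xv R Q n1 n2 w * @Xv R Q n2 n3 w * @Xv R Q n3 n4 w * @Xv R Q n1 n4 w).

(* Main.v *)
Require Import Defs.
From HB Require Import structures.
From mathcomp Require Import all_boot all_order all_algebra.
From Stdlib Require Import Ring.
Import Order.TTheory GRing.Theory Num.Theory.
Local Open Scope ring_scope.
Section S.
Variable R : realFieldType.
Definition add' (x y : GRing.PzSemiRing.sort R) : GRing.PzSemiRing.sort R := x + y.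
Definition mul' (x y : GRing.PzSemiRing.sort R) : GRing.PzSemiRing.sort R := x * y.
Definition opp' (x : GRing.PzSemiRing.sort R) : GRing.PzSemiRing.sort R := - x.
Definition sub' (x y : GRing.PzSemiRing.sort R) : GRing.PzSemiRing.sort R := x - y.
Lemma RthR : @ring_theory (GRing.PzSemiRing.sort R) 0 1 add' mul' sub' opp' eq.
Proof.
split=> *; rewrite /add' /mul' /sub' /opp'; [exact: add0r|exact: addrC|exact: addrA|exact: mul1r|exact: mulrC|exact: mulrA|exact: mulrDl|done|exact: subrr].
Qed.
Add Ring Rring : RthR.
Definition RthR2 : @ring_theory (Num.RealField.sort R) 0 1 add' mul' sub' opp' eq := RthR.
Add Ring Rring2 : RthR2.


Ltac nring := rewrite -?[_ + _]/(add' _ _) -?[_ * _]/(mul' _ _) -?[- _]/(opp' _); match goal with |- @eq _ ?x ?y => let T := type of x in change (@eq T x y) end; ring.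

Lemma Xmarg (p : edge -> R) (s : seq edge) : uniq s ->
  \sum_(X : {ffun edge -> bool})
     (\prod_e (if X e then p e else 1 - p e)) * \prod_(e <- s) (X e)%:R
  = \prod_(e <- s) p e.
Proof.
move=> us.
rewrite [RHS](big_uniq _ us) [RHS]big_mkcond /=.
transitivity (\sum_(X : {ffun edge -> bool}) \prod_e ((if X e then p e else 1 - p e) * (if e \in s then (X e)%:R else 1))).
  apply: eq_bigr => X _. rewrite big_split /=. congr (_ * _). rewrite -big_mkcond /=. by rewrite (big_uniq _ us).
rewrite -(@bigA_distr_bigA _ 0 1 *%R +%R _ _ (fun e (b : bool) => (if b then p e else 1 - p e) * (if e \in s then b%:R else 1))) /=.
apply: eq_bigr => e _; rewrite big_bool /=.
case: (e \in s).
  by rewrite mulr1 mulr0 addr0.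
by rewrite !mulr1 addrC subrK.
Qed.

Lemma ExpectS (Q : nat) (pi : 'I_Q -> R) (a b : R) (s : seq edge) : uniq s ->
  Expect pi a b (fun w => \prod_(e <- s) (w.2 e)%:R) =
  \sum_(Z : {ffun node -> 'I_Q}) (\prod_i pi (Z i)) *
     \prod_(e <- s) affil a b (Z (val e).1) (Z (val e).2).
Proof.
move=> us; rewrite /Expect.
rewrite (eq_bigr (fun w => pmf pi a b (w.1, w.2) * \prod_(e <- s) (w.2 e)%:R)); last by case.
rewrite -(pair_bigA _ (fun Z X => pmf pi a b (Z, X) * \prod_(e <- s) (X e)%:R)) /=.
apply: eq_bigr => Z _; rewrite /pmf /=.
under eq_bigr do rewrite -mulrA.
by rewrite -mulr_sumr Xmarg.
Qed.

Lemma nvals : [/\ (n1 : nat) = 0%N, (n2 : nat) = 1%N, (n3 : nat) = 2%N & (n4 : nat) = 3%N].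
Proof. by rewrite /n1 /n2 /n3 /n4 !inordK. Qed.

Lemma sumZ (Q : nat) (G : 'I_Q -> 'I_Q -> 'I_Q -> 'I_Q -> R) :
  \sum_(Z : {ffun node -> 'I_Q}) G (Z n1) (Z n2) (Z n3) (Z n4) =
  \sum_a \sum_b \sum_c \sum_d G a b c d.
Proof.
have [e1 e2 e3 e4] := nvals.
pose g := fun t : 'I_Q * ('I_Q * ('I_Q * 'I_Q)) =>
  [ffun i : node => nth t.1 [:: t.1; t.2.1; t.2.2.1; t.2.2.2] i].
pose h := fun Z : {ffun node -> 'I_Q} => (Z n1, (Z n2, (Z n3, Z n4))).
have gK : cancel g h.
  by case=> a [b [c d]]; rewrite /h /g !ffunE e1 e2 e3 e4.
have hK : cancel h g.
  move=> Z; apply/ffunP => i; rewrite ffunE /h /=.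
  case: i => [[|[|[|[|//]]]] Hi] /=; congr (Z _); apply: val_inj => //=.
rewrite (reindex g (onW_bij _ (Bijective gK hK))) /=.
symmetry.
under eq_bigr do under eq_bigr do rewrite pair_bigA.
under eq_bigr do rewrite pair_bigA.
rewrite pair_bigA.
apply: eq_bigr => -[a [b [c d]]] _ /=.
by rewrite /g !ffunE e1 e2 e3 e4.
Qed.

Lemma Expect_ext Q (pi : 'I_Q -> R) a b f g :
  (forall w, f w = g w) -> Expect pi a b f = Expect pi a b g.
Proof. by move=> H; apply: eq_bigr => w _; rewrite H. Qed.

Lemma Xv_e Q (i j : node) (H : (i < j)%N) (w : outcome Q) :
  @Xv R Q i j w = (w.2 (Sub (i, j) H : edge))%:R.
Proof. by rewrite /Xv insubT. Qed.

Lemma h12 : (n1 < n2)%N. Proof. by have [-> -> _ _] := nvals. Qed.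
Lemma h23 : (n2 < n3)%N. Proof. by have [_ -> -> _] := nvals. Qed.
Lemma h34 : (n3 < n4)%N. Proof. by have [_ _ -> ->] := nvals. Qed.
Lemma h14 : (n1 < n4)%N. Proof. by have [-> _ _ ->] := nvals. Qed.

Definition e12 : edge := Sub (n1, n2) h12.
Definition e23 : edge := Sub (n2, n3) h23.
Definition e34 : edge := Sub (n3, n4) h34.
Definition e14 : edge := Sub (n1, n4) h14.

Lemma uniq4 : uniq [:: e12; e23; e34; e14].
Proof.
have [e1 e2 e3 e4] := nvals.
rewrite /= !inE -!(inj_eq val_inj) /= !xpair_eqE -!(inj_eq val_inj) /=.
by rewrite e1 e2 e3 e4.
Qed.

Lemma sum_ind1 Q (f : 'I_Q -> R) a : \sum_b f b * (a == b)%:R = f a.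
Proof.
rewrite (bigD1 a) //= eqxx mulr1 big1 ?addr0 // => b nb.
by rewrite eq_sym (negbTE nb) mulr0.
Qed.

Lemma affilE Q (al be : R) (a b : 'I_Q) :
  affil al be a b = be + (al - be) * (a == b)%:R.
Proof. rewrite /affil; case: eqP => _ /=; rewrite ?mulr1 ?mulr0 ?addr0 //. nring. Qed.

Lemma sumP Q (al be : R) (a : 'I_Q) :
  \sum_b affil al be a b = Q%:R * be + (al - be).
Proof.
under eq_bigr do rewrite affilE.
by rewrite big_split /= sumr_const card_ord sum_ind1 mulr_natl.
Qed.

Lemma sumF Q (al be : R) (a c : 'I_Q) :
  \sum_b affil al be a b * affil al be b c =
  Q%:R * be * be + be * (al - be) + (al - be) * be + (al - be) * (al - be) * (c == a)%:R.
Proof.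
pose d := al - be.
have E : forall b, affil al be a b * affil al be b c =
   be * be + (be * d) * (c == b)%:R + (d * be + d * d * (c == a)%:R) * (a == b)%:R.
  move=> b; rewrite !affilE -/d.
  case: (a =P b) => [->|/eqP nab]; rewrite ?eqxx ?(negbTE nab) /= ?mulr1n ?mulr0n.
    rewrite (eq_sym b c). nring.
  rewrite (eq_sym b c) !mulr0 !addr0; nring.
under eq_bigr do rewrite E.
rewrite !big_split /= sumr_const card_ord sum_ind1.
under eq_bigr do rewrite (eq_sym c).
rewrite sum_ind1 -/d -[(be * be) *+ Q]mulr_natl (eq_sym a c); nring.
Qed.

Lemma m1_val Q (al be : R) :
  m1 Q al be = (Q%:R)^-1 ^+ 4 * (Q%:R * Q%:R * Q%:R * (Q%:R * be + (al - be))).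
Proof.
rewrite /m1 (@Expect_ext _ _ _ _ _ (fun w => \prod_(e <- [:: e12]) (w.2 e)%:R)); last first.
  by move=> w; rewrite big_seq1 (@Xv_e _ _ _ h12).
rewrite ExpectS //.
under eq_bigr do rewrite big_seq1 /uniform_prior prodr_const card_ord /=.
rewrite -mulr_sumr.
rewrite (@sumZ Q (fun a b c d => affil al be a b)).
congr (_ * _).
under eq_bigr do under eq_bigr do under eq_bigr do rewrite sumr_const card_ord.
under eq_bigr do under eq_bigr do rewrite sumrMnl sumr_const card_ord.
under eq_bigr do rewrite sumrMnl sumrMnl sumP.
rewrite sumr_const card_ord.
by rewrite -!mulrnA -(mulr_natl (Q%:R * be + (al - be))) !natrM !mulrA.
Qed.

Lemma affil_sym Q (al be : R) (a b : 'I_Q) : affil al be a b = affil al be b a.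
Proof. by rewrite /affil eq_sym. Qed.

Lemma inner Q (al be : R) (a c : 'I_Q) :
  \sum_b \sum_d affil al be a b * (affil al be b c * (affil al be c d * affil al be a d)) =
  (Q%:R * be * be + be * (al - be) + (al - be) * be + (al - be) * (al - be) * (c == a)%:R) *
  (Q%:R * be * be + be * (al - be) + (al - be) * be + (al - be) * (al - be) * (a == c)%:R).
Proof.
rewrite -sumF -sumF big_distrlr /=.
apply: eq_bigr => b _; apply: eq_bigr => d _.
by rewrite (@affil_sym Q al be a d) !mulrA.
Qed.

Lemma sq_ind (K v : R) (x : bool) :
  (K + v * x%:R) * (K + v * x%:R) = K * K + (K * v + v * K + v * v) * x%:R.
Proof. case: x => /=; rewrite ?mulr1n ?mulr0n ?mulr0 ?mulr1 ?addr0; nring. Qed.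

Lemma m41_val Q (al be : R) :
  let K := Q%:R * be * be + be * (al - be) + (al - be) * be in
  let v := (al - be) * (al - be) in
  m41 Q al be = (Q%:R)^-1 ^+ 4 * (Q%:R * (Q%:R * (K * K) + (K * v + v * K + v * v))).
Proof.
move=> K v.
rewrite /m41 (@Expect_ext _ _ _ _ _ (fun w => \prod_(e <- [:: e12; e23; e34; e14]) (w.2 e)%:R)); last first.
  move=> w; rewrite !big_cons big_nil mulr1 !mulrA (@Xv_e _ _ _ h12) (@Xv_e _ _ _ h23).
  by rewrite (@Xv_e _ _ _ h34) (@Xv_e _ _ _ h14).
rewrite ExpectS; last exact: uniq4.
under eq_bigr do rewrite !big_cons big_nil mulr1 /uniform_prior prodr_const card_ord /=.
rewrite -mulr_sumr.
rewrite (@sumZ Q (fun a b c d => affil al be a b * (affil al be b c * (affil al be c d * affil al be a d)))).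
congr (_ * _).
under eq_bigr do rewrite exchange_big /=.
under eq_bigr do under eq_bigr do rewrite inner (eq_sym _ _) sq_ind.
under eq_bigr do rewrite big_split /= sumr_const card_ord sum_ind1.
rewrite sumr_const card_ord -/K -/v.
by rewrite -(mulr_natl (K * K)) -(mulr_natl (Q%:R * (K * K) + (K * v + v * K + v * v))).
Qed.

Lemma main Q (al be : R) : (2 <= Q)%N -> al != be -> m1 Q al be ^+ 4 < m41 Q al be.
Proof.
move=> hQ hab; rewrite m41_val m1_val /=.
set q : R := Q%:R; set i := q^-1; set d := al - be.
have q0 : q != 0 by rewrite /q pnatr_eq0 -lt0n (leq_trans _ hQ).
have qi : q * i = 1 by rewrite /i mulfV.
have m1E : i ^+ 4 * (q * q * q * (q * be + d)) = i * (q * be + d).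
  have -> : i ^+ 4 * (q * q * q * (q * be + d)) = (q * i) * (q * i) * (q * i) * (i * (q * be + d)).
    rewrite !exprS expr0 mulr1. nring.
  by rewrite qi !mul1r.
rewrite m1E exprMn ltr_pM2l; last by rewrite exprn_gt0 // /i invr_gt0 /q ltr0n (leq_trans _ hQ).
rewrite -subr_gt0.
have -> : q * (q * ((q * be * be + be * d + d * be) * (q * be * be + be * d + d * be)) +
          ((q * be * be + be * d + d * be) * (d * d) + d * d * (q * be * be + be * d + d * be) + d * d * (d * d)))
          - (q * be + d) ^+ 4 = q * ((d * d) * (d * d)) - (d * d) * (d * d).
  rewrite !exprS expr0 mulr1. nring.
have d0 : d != 0 by rewrite /d subr_eq0.
have dd : 0 < d * d by rewrite lt0r mulf_neq0 //= -expr2 sqr_ge0.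
have h1 : (1 : R) < Q%:R by rewrite ltr1n.
by rewrite subr_gt0 ltr_pMl ?(mulr_gt0 dd dd).
Qed.
End S.

Theorem lemma4 (R : realFieldType) (Q : nat) (alpha beta : R)
  (hQ : (2 <= Q)%N)
  (ha : 0 <= alpha <= 1) (hb : 0 <= beta <= 1) (hab : alpha != beta) :
  m41 Q alpha beta > (m1 Q alpha beta) ^+ 4.
Proof. exact: main. Qed.
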